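(* Let $(V_1,\dots,V_n)$ and $(V_1',\dots,V_n')$ be $n$-tuples of doubly non-commuting isometries on Hilbert spaces $H$ and $H'$, with identical structure constants $z_{ij}$. Then the following are equivalent: (1) $(V_1,\dots,V_n)$ and $(V_1',\dots,V_n')$ are unitarily equivalent; (2) for every $A\subseteq\{1,\dots,n\}$, the $A$-wandering data $\mathcal D_A$ of $(V_1,\dots,V_n)$ and the $A$-wandering data $\mathcal D_A'$ of $(V_1',\dots,V_n')$ are unitarily equivalent.
   Context: Fix $n\ge1$ and $z_{ij}\in\mathbb T$ ($i\ne j$) with $z_{ji}=\overline{z_{ij}}$. An $n$-tuple of isometries $(V_1,\dots,V_n)$ on $H$ is doubly non-commuting if $V_i^*V_j=\overline{z_{ij}}V_jV_i^*$ for $i\neq j$. For $A\subseteq\{1,\dots,n\}$ with $A^c=\{j_1<\dots<j_m\}$, the $A$-wandering subspace is $W_A=\bigcap_{(m_j)\in\mathbb N_0^{A^c}}\big(\prod_{j\in A^c}V_j^{m_j}\big)\big(\bigcap_{i\in A}\ker V_i^*\big)$ (empty intersection of kernels $=H$, empty product $=$ identity); it reduces each $V_j$, $j\in A^c$, and the $A$-wandering data are the tuple $\mathcal D_A=(\mathbf 1_{W_A},V_{j_1}|_{W_A},\dots,V_{j_m}|_{W_A})$. Tuples $(T_1,\dots,T_r)$ on $K$ and $(T_1',\dots,T_r')$ on $K'$ are unitarily equivalent if there is a unitary $\varphi:K\to K'$ with $\varphi T_i=T_i'\varphi$ for all $i$. *)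

(* Defs.v *)
From HB Require Import structures.
From mathcomp Require Import all_boot all_order all_algebra.
From mathcomp Require Import complex.
From mathcomp Require Import reals.

Set Implicit Arguments.
Unset Strict Implicit.
Unset Printing Implicit Defensive.

Import Order.TTheory GRing.Theory Num.Theory.
Local Open Scope ring_scope.

Section Hilbert.
Variable R : realType.
Local Notation C := R[i].

Section OneSpace.
Variable H : lmodType C.
Variable ip : H -> H -> C.   (* inner product, linear in the first argument *)

Definition is_inner_product : Prop :=
  [/\ forall (a : C) (x y w : H), ip (a *: x + y) w = a * ip x w + ip y w,
      forall x y, ip y x = (ip x y)^*,
      forall x, 0 <= ip x x &
      forall x, ip x x = 0 -> x = 0].

(* Cauchy sequences / convergence w.r.t. the norm ||x|| = sqrt <x,x>
   (expressed through the squared norm, which is equivalent) *)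
Definition ip_cauchy (u : nat -> H) : Prop :=
  forall e : C, 0 < e -> exists N : nat, forall m k : nat, (N <= m)%N -> (N <= k)%N ->
    `|ip (u m - u k) (u m - u k)| < e.

Definition ip_converges (u : nat -> H) (x : H) : Prop :=
  forall e : C, 0 < e -> exists N : nat, forall m : nat, (N <= m)%N ->
    `|ip (u m - x) (u m - x)| < e.

Definition is_hilbert_space : Prop :=
  is_inner_product /\ forall u, ip_cauchy u -> exists x, ip_converges u x.

Definition is_linear_op (T : H -> H) : Prop :=
  forall (a : C) (x y : H), T (a *: x + y) = a *: T x + T y.

Definition is_isometry (T : H -> H) : Prop :=
  is_linear_op T /\ forall x y, ip (T x) (T y) = ip x y.

Definition is_adjoint (T S : H -> H) : Prop :=
  forall x y, ip (T x) y = ip x (S y).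

Variable n : nat.

Definition doubly_noncommuting (z : 'I_n -> 'I_n -> C) (V Vs : 'I_n -> H -> H) : Prop :=
  (forall i, is_isometry (V i) /\ is_adjoint (V i) (Vs i)) /\
  (forall i j, i != j -> forall x, Vs i (V j x) = (z i j)^* *: V j (Vs i x)).

(* prod_{j in A^c} V_j^{m_j} = V_{j1}^{m_{j1}} ... V_{jm}^{m_{jm}},  j1 < ... < jm *)
Definition prod_pow (V : 'I_n -> H -> H) (A : {set 'I_n}) (m : 'I_n -> nat) : H -> H :=
  foldr (fun j f => fun x => iter (m j) (V j) (f x)) id
        [seq j <- enum 'I_n | j \notin A].

(* the A-wandering subspace W_A (values of m on A are irrelevant) *)
Definition wandering (V Vs : 'I_n -> H -> H) (A : {set 'I_n}) : H -> Prop :=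
  fun x => forall m : 'I_n -> nat,
    exists y, (forall i, i \in A -> Vs i y = 0) /\ x = prod_pow V A m y.

End OneSpace.

Definition structure_constants (n : nat) (z : 'I_n -> 'I_n -> C) : Prop :=
  forall i j, i != j -> `|z i j| = 1 /\ z j i = (z i j)^*.

Definition unitary_between (H H' : lmodType C) (ip : H -> H -> C) (ip' : H' -> H' -> C)
  (W : H -> Prop) (W' : H' -> Prop) (phi : H -> H') : Prop :=
  [/\ forall x, W x -> W' (phi x),
      forall x', W' x' -> exists x, W x /\ phi x = x',
      forall (a : C) x y, W x -> W y -> phi (a *: x + y) = a *: phi x + phi y &
      forall x y, W x -> W y -> ip' (phi x) (phi y) = ip x y].

Definition unitarily_equivalent (H H' : lmodType C) (ip : H -> H -> C) (ip' : H' -> H' -> C)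
  (n : nat) (V : 'I_n -> H -> H) (V' : 'I_n -> H' -> H') : Prop :=
  exists phi : H -> H',
    unitary_between ip ip' (fun _ => True) (fun _ => True) phi /\
    forall i x, phi (V i x) = V' i (phi x).

(* unitary equivalence of the A-wandering data
   D_A = (1_{W_A}, V_{j1}|W_A, ..., V_{jm}|W_A) and D'_A
   (the component 1_{W_A} is intertwined by any phi) *)
Definition wandering_data_equivalent (H H' : lmodType C) (ip : H -> H -> C) (ip' : H' -> H' -> C)
  (n : nat) (V Vs : 'I_n -> H -> H) (V' Vs' : 'I_n -> H' -> H') (A : {set 'I_n}) : Prop :=
  exists phi : H -> H',
    unitary_between ip ip' (wandering V Vs A) (wandering V' Vs' A) phi /\
    forall j, j \notin A -> forall x, wandering V Vs A x -> phi (V j x) = V' j (phi x).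

End Hilbert.

(* Main.v *)
Require Import Defs.
From HB Require Import structures.
From mathcomp Require Import all_boot all_order all_algebra.
From mathcomp Require Import complex.
From mathcomp Require Import reals.
From mathcomp Require Import boolp.
From mathcomp Require classical_sets.
From mathcomp Require Import zify ring lra.
Import Order.TTheory GRing.Theory Num.Theory.
Local Open Scope ring_scope.

Module P1.

Local Open Scope complex_scope.
Local Open Scope ring_scope.
Set Implicit Arguments.
Unset Strict Implicit.
Unset Printing Implicit Defensive.

Section IP.
Variable R : realType.
Local Notation C := R[i].
Variable H : lmodType C.
Variable ip : H -> H -> C.
Hypothesis hip : is_inner_product ip.

Lemma ipDl x y w : ip (x + y) w = ip x w + ip y w.
Proof. case: hip => h _ _ _. have := h 1 x y w. by rewrite scale1r mul1r. Qed.

Lemma ip0l w : ip 0 w = 0.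
Proof. have := ipDl 0 0 w; rewrite addr0 => h.
have : ip 0 w + 0 = ip 0 w + ip 0 w by rewrite addr0.
by move/addrI. Qed.

Lemma ipZl a x w : ip (a *: x) w = a * ip x w.
Proof. case: hip => h _ _ _. by have := h a x 0 w; rewrite addr0 ip0l addr0. Qed.

Lemma ipC x y : ip y x = (ip x y)^*.
Proof. by case: hip. Qed.

Lemma ip0r w : ip w 0 = 0.
Proof. by rewrite ipC ip0l conjC0. Qed.

Lemma ipNl x w : ip (- x) w = - ip x w.
Proof. by rewrite -scaleN1r ipZl mulN1r. Qed.

Lemma ipBl x y w : ip (x - y) w = ip x w - ip y w.
Proof. by rewrite ipDl ipNl. Qed.

Lemma ipDr x y w : ip w (x + y) = ip w x + ip w y.
Proof. by rewrite [ip w x]ipC [ip w y]ipC ipC ipDl rmorphD. Qed.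

Lemma ipZr a x w : ip w (a *: x) = a^* * ip w x.
Proof. by rewrite [ip w x]ipC ipC ipZl rmorphM. Qed.

Lemma ipNr x w : ip w (- x) = - ip w x.
Proof. by rewrite [ip w x]ipC ipC ipNl rmorphN. Qed.

Lemma ipBr x y w : ip w (x - y) = ip w x - ip w y.
Proof. by rewrite ipDr ipNr. Qed.

Lemma ip_ge0 x : 0 <= ip x x.
Proof. by case: hip. Qed.

Lemma ip_eq0 x : ip x x = 0 -> x = 0.
Proof. by case: hip => _ _ _; apply. Qed.

Lemma ip_ortho x : (forall y, ip y x = 0) -> x = 0.
Proof. by move=> h; apply: ip_eq0; apply: h. Qed.

Lemma ip_ext x x' : (forall y, ip y x = ip y x') -> x = x'.
Proof. move=> h; apply/eqP; rewrite -subr_eq0; apply/eqP/ip_ortho => y.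
by rewrite ipBr h subrr. Qed.

Definition nn x := complex.Re (ip x x).

Lemma ip_self x : ip x x = (nn x)%:C.
Proof. by have := ip_ge0 x; rewrite /nn; case: (ip x x) => a b; rewrite lecE /= => /andP[/eqP -> _]. Qed.

Lemma nn_ge0 x : 0 <= nn x.
Proof. by have := ip_ge0 x; rewrite ip_self lecR. Qed.

Lemma nn_eq0 x : nn x = 0 -> x = 0.
Proof. by move=> h; apply: ip_eq0; rewrite ip_self h. Qed.

End IP.


End P1.
Import P1.

Module P2.

Local Open Scope complex_scope.
Local Open Scope ring_scope.
Set Implicit Arguments.
Unset Strict Implicit.
Unset Printing Implicit Defensive.

Section IP2.
Variable R : realType.
Local Notation C := R[i].
Variable H : lmodType C.
Variable ip : H -> H -> C.
Hypothesis hip : is_inner_product ip.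
Local Notation nn := (nn ip).

Definition nsq (c : C) : R := complex.Re c ^+ 2 + complex.Im c ^+ 2.

Lemma cReD (a b : C) : complex.Re (a + b) = complex.Re a + complex.Re b.
Proof. by case: a; case: b. Qed.
Lemma cImD (a b : C) : complex.Im (a + b) = complex.Im a + complex.Im b.
Proof. by case: a; case: b. Qed.
Lemma cReN (a : C) : complex.Re (- a) = - complex.Re a.
Proof. by case: a. Qed.
Lemma cImN (a : C) : complex.Im (- a) = - complex.Im a.
Proof. by case: a. Qed.
Lemma cReM (a b : C) : complex.Re (a * b) = complex.Re a * complex.Re b - complex.Im a * complex.Im b.
Proof. by case: a; case: b => *; rewrite /= . Qed.
Lemma cImM (a b : C) : complex.Im (a * b) = complex.Re a * complex.Im b + complex.Im a * complex.Re b.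
Proof. by case: a; case: b => * /=; lra. Qed.
Lemma cReJ (a : C) : complex.Re (a^*) = complex.Re a.
Proof. by case: a. Qed.
Lemma cImJ (a : C) : complex.Im (a^*) = - complex.Im a.
Proof. by case: a. Qed.
Lemma cReR (r : R) : complex.Re (r%:C) = r. Proof. by []. Qed.
Lemma cImR (r : R) : complex.Im (r%:C) = 0. Proof. by []. Qed.

Lemma nnD x y : nn (x + y) = nn x + nn y + 2 * complex.Re (ip x y).
Proof.
rewrite /P1.nn (ipDl hip) !(ipDr hip) !cReD [ip y x](ipC hip) cReJ. lra.
Qed.


Lemma nnZ a x : nn (a *: x) = nsq a * nn x.
Proof.
rewrite /P1.nn (ipZl hip) (ipZr hip) (ip_self hip) mulrA cReM cImR cReR.
rewrite cReM cImJ cReJ /nsq; lra.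
Qed.

Lemma nn_ler_Re x y : complex.Re (ip x y) ^+ 2 <= nn x * nn y.
Proof.
have key : forall t : R, 0 <= nn x + 2 * t * complex.Re (ip x y) + t ^+ 2 * nn y.
  move=> t; have := nn_ge0 hip (x + t%:C *: y).
  rewrite nnD nnZ (ipZr hip) cReM cReJ cImJ /nsq /=; lra.
have [/eqP y0|ny0] := boolP (nn y == 0).
  rewrite y0 mulr0 (nn_eq0 hip y0) (ip0r hip) /=; lra.
have py : 0 < nn y by rewrite lt_def ny0 nn_ge0.
have := key (- complex.Re (ip x y) / nn y).
set a := complex.Re (ip x y) => h.
have e : nn x + 2 * (- a / nn y) * a + (- a / nn y) ^+ 2 * nn y = nn x - a ^+ 2 / nn y.
  by field; rewrite gt_eqF.
by rewrite e subr_ge0 ler_pdivrMr // mulrC in h.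
Qed.

Lemma Im_ipE x y : complex.Im (ip x y) = complex.Re (ip x ('i *: y)).
Proof. by rewrite (ipZr hip) cReM /=; lra. Qed.

Lemma nnZi y : nn ('i *: y) = nn y.
Proof. by rewrite nnZ /nsq /= expr0n /= expr1n add0r mul1r. Qed.

Lemma nsq_ip x y : nsq (ip x y) <= 2 * (nn x * nn y).
Proof.
rewrite /nsq Im_ipE.
have := nn_ler_Re x y; have := nn_ler_Re x ('i *: y); rewrite nnZi; lra.
Qed.

Lemma nsq_ge0 c : 0 <= nsq c.
Proof. rewrite /nsq; nra. Qed.

Lemma nsq_eq0 c : nsq c = 0 -> c = 0.
Proof. case: c => a b; rewrite /nsq /= => h.
have ha : a = 0 by nra. have hb : b = 0 by nra. by rewrite ha hb. Qed.

End IP2.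


End P2.
Import P2.

Module P3.

Local Open Scope complex_scope.
Local Open Scope ring_scope.
Set Implicit Arguments.
Unset Strict Implicit.
Unset Printing Implicit Defensive.

Section Conv.
Variable R : realType.
Local Notation C := R[i].
Variable H : lmodType C.
Variable ip : H -> H -> C.
Hypothesis hip : is_inner_product ip.
Local Notation nn := (nn ip).

Lemma nnN x : nn (- x) = nn x.
Proof. rewrite -scaleN1r (nnZ hip) /nsq /=. lra. Qed.

Lemma nnD_le x y : nn (x + y) <= 2 * nn x + 2 * nn y.
Proof.
have := nnD hip x y; have := nnD hip x (- y); rewrite nnN (ipNr hip) cReN.
have := nn_ge0 hip (x - y); lra.
Qed.

Lemma nnB_sym x y : nn (x - y) = nn (y - x).
Proof. by rewrite -nnN opprB. Qed.

Lemma nn_tri x y z : nn (x - z) <= 2 * nn (x - y) + 2 * nn (y - z).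
Proof. by have := nnD_le (x - y) (y - z); rewrite addrA subrK. Qed.

Definition conv (u : nat -> H) x := forall e : R, 0 < e -> exists N, forall m, (N <= m)%N -> nn (u m - x) < e.
Definition cauchy (u : nat -> H) := forall e : R, 0 < e -> exists N, forall m k, (N <= m)%N -> (N <= k)%N -> nn (u m - u k) < e.

Lemma normC_real (r : R) : 0 <= r -> `|r%:C| = r%:C.
Proof. by move=> h; rewrite ger0_norm // lecR. Qed.

Lemma cauchy_ip u : cauchy u -> ip_cauchy ip u.
Proof.
move=> h e; rewrite ltcE /= => /andP[/eqP ie re].
have [N hN] := h _ re; exists N => m k hm hk.
rewrite (ip_self hip) normC_real ?nn_ge0 // ltcE /= -ie eqxx /=; exact: hN.
Qed.

Lemma ip_conv u x : ip_converges ip u x -> conv u x.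
Proof.
move=> h e he; have [|N hN] := h (e%:C); first by rewrite ltcR.
exists N => m hm; have := hN m hm.
by rewrite (ip_self hip) normC_real ?nn_ge0 // ltcR.
Qed.

Lemma conv_cauchy u x : conv u x -> cauchy u.
Proof.
move=> h e he; have [|N hN] := h (e / 4); first lra.
exists N => m k hm hk; have := nn_tri (u m) x (u k).
rewrite (nnB_sym x). have := hN m hm; have := hN k hk; lra.
Qed.

Lemma conv_uniq u x y : conv u x -> conv u y -> x = y.
Proof.
move=> hx hy; apply/eqP; rewrite -subr_eq0; apply/eqP/(nn_eq0 hip).
apply/eqP; rewrite eq_le (nn_ge0 hip) andbT; apply/ler_addgt0Pr => e he; rewrite add0r.
have [|N1 h1] := hx (e / 4); first lra. have [|N2 h2] := hy (e / 4); first lra.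
have := h1 (maxn N1 N2) (leq_maxl _ _); have := h2 (maxn N1 N2) (leq_maxr _ _).
have := nn_tri x (u (maxn N1 N2)) y; rewrite (nnB_sym x (u _)); lra.
Qed.

Lemma nsqN (c : C) : nsq (- c) = nsq c.
Proof. by rewrite /nsq cReN cImN !sqrrN. Qed.

Lemma nsqD_le (a b : C) : nsq (a + b) <= 2 * nsq a + 2 * nsq b.
Proof. rewrite /nsq cReD cImD.
have := sqr_ge0 (complex.Re a - complex.Re b); have := sqr_ge0 (complex.Im a - complex.Im b).
rewrite !sqrrD ?sqrrB; lra. Qed.

Lemma nsq_small (c : C) : (forall e : R, 0 < e -> nsq c < e) -> c = 0.
Proof.
move=> h; apply: nsq_eq0; apply/eqP; rewrite eq_le nsq_ge0 andbT.
apply/ler_addgt0Pr => e he; rewrite add0r; apply/ltW; exact: h.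
Qed.

Lemma conv_ipl u x b : conv u x -> forall e : R, 0 < e -> exists N, forall m, (N <= m)%N ->
  nsq (ip (u m) b - ip x b) < e.
Proof.
move=> h e he.
have [|N hN] := h (e / (2 * nn b + 1)); first by apply: divr_gt0 => //; have := nn_ge0 hip b; lra.
exists N => m hm; rewrite -(ipBl hip).
apply: (le_lt_trans (nsq_ip hip _ _)).
have := hN m hm; have hb := nn_ge0 hip b; have h0 := nn_ge0 hip (u m - x).
rewrite ltr_pdivlMr; last by lra.
nra.
Qed.

End Conv.


End P3.
Import P3.

Module P4.
Import classical_sets.

Local Open Scope complex_scope.
Local Open Scope ring_scope.
Set Implicit Arguments.
Unset Strict Implicit.
Unset Printing Implicit Defensive.

Definition epsn (R : realType) (m : nat) : R := 1 / (m.+1)%:R.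

Lemma epsn_gt0 (R : realType) m : 0 < epsn R m.
Proof. by apply: divr_gt0 => //; rewrite ltr0n. Qed.

Lemma small_inv (R : realType) (e : R) : 0 < e -> exists N, forall m, (N <= m)%N -> epsn R m < e.
Proof.
move=> he; rewrite /epsn; exists (Num.Def.archi_bound (1 / e)) => m hm.
have h1 : 1 / e < (Num.Def.archi_bound (1 / e))%:R by apply: archi_boundP; apply/ltW; apply: divr_gt0.
have h2 : (Num.Def.archi_bound (1 / e))%:R <= m%:R :> R by rewrite ler_nat.
have h3 : (m%:R : R) < m.+1%:R by rewrite ltr_nat.
have hm1 : (0 : R) < m.+1%:R by rewrite ltr0n.
have h4 : 1 / e < m.+1%:R by apply: (lt_trans h1); apply: (le_lt_trans h2).
rewrite ltr_pdivrMr // mulrC -ltr_pdivrMr //.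
Qed.

Section Dens.
Variable R : realType.
Local Notation C := R[i].
Variable H : lmodType C.
Variable ip : H -> H -> C.
Hypothesis hip : is_inner_product ip.
Hypothesis hcomp : forall u, cauchy ip u -> exists x, conv ip u x.
Local Notation nn := (nn ip).
Variable S : H -> Prop.
Hypothesis S0 : S 0.
Hypothesis Scomb : forall a x y, S x -> S y -> S (a *: x + y).
Hypothesis Stot : forall y, (forall s, S s -> ip y s = 0) -> y = 0.

Lemma density x e : 0 < e -> exists v, S v /\ nn (x - v) < e.
Proof.
move=> he.
pose D : set R := fun r => exists v, S v /\ r = nn (x - v).
have Dne : D (nn (x - 0)) by exists 0.
have Dlb : lbound D 0 by move=> r [v [_ ->]]; apply: nn_ge0.
have Dinf : has_inf D by split; [exists (nn (x - 0)) | exists 0].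
set d := inf D.
have dle : forall v, S v -> d <= nn (x - v).
  by move=> v Sv; apply: ge_inf; [exists 0 | exists v].
have hv : forall N : nat, exists v, S v /\ nn (x - v) < d + epsn R N.
  move=> N; have [r [v [Sv ->]] hr] := inf_adherent (epsn_gt0 R N) Dinf.
  by exists v.
have [v hvP] := choice hv.
have Smid : forall m k, S ((1/2) *: v m + (1/2) *: v k).
  move=> m k; apply: Scomb; first by case: (hvP m).
  by rewrite -[X in S X]addr0; apply: Scomb => //; case: (hvP k).
have hc : cauchy ip v.
  move=> e' he'; have [|N hN] := @small_inv R (e' / 4); first lra.
  exists N => m k hm hk.
  have := dle _ (Smid m k).
  have e1 := nnD hip (x - v m) (x - v k).
  have e2 := nnD hip (x - v m) (- (x - v k)).
  rewrite (ipNr hip) cReN nnN // in e2.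
  have -> : v m - v k = x - v k + - (x - v m) by rewrite opprB [RHS]addrC [RHS]addrA addrNK.
  have e3 : x - v m + (x - v k) = (2 : C) *: (x - ((1/2) *: v m + (1/2) *: v k)).
    rewrite scalerBr scalerDr !scalerA.
    have -> : ((2 : C) * (1/2) : C) = 1 by rewrite mul1r mulfV // pnatr_eq0.
    by rewrite !scale1r scaler_nat mulr2n opprD; rewrite !addrA; congr (_ + _); rewrite addrAC.
  rewrite e3 (nnZ hip) in e1.
  have hn2 : nsq (2 : C) = 4 by rewrite /nsq /=; ring.
  rewrite hn2 in e1.
  have := hvP m; have := hvP k; case=> _ hk'; case=> _ hm'.
  have := hN m hm; have := hN k hk.
  have e4 := nnD hip (x - v k) (- (x - v m)). rewrite (ipNr hip) cReN nnN // in e4.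
  have e5 : complex.Re (ip (x - v k) (x - v m)) = complex.Re (ip (x - v m) (x - v k)).
    by rewrite (ipC hip) cReJ.
  move=> h1 h2 h3. have t1 : nn (x - v k - (x - v m)) = 2 * nn (x - v m) + 2 * nn (x - v k) - 4 * nn (x - ((1 / 2) *: v m + (1 / 2) *: v k)).
  rewrite e4 e1 e5. lra.
  lra.
have [p hp] := hcomp hc.
have orth : forall s, S s -> ip (x - p) s = 0.
  move=> s Ss; set c := ip (x - p) s.
  apply/eqP; apply/negPn/negP => cn0.
  have K0 : 0 < nsq c.
    rewrite lt_def nsq_ge0 andbT; apply/negP => /eqP /nsq_eq0 h.
    by rewrite h eqxx in cn0.
  set K := nsq c.
  set r := 1 / (nn s + 1).
  have hs := nn_ge0 hip s.
  have r0 : 0 < r by apply: divr_gt0; lra.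
  have rs : r * nn s < 1.
    by rewrite /r mul1r ltr_pdivrMl; lra.
  have [|N1 hN1] := @small_inv R (r * K / 2); first by apply: divr_gt0 => //; apply: mulr_gt0.
  have [|N2 hN2] := conv_ipl hip s hp (e := K / 16); first by apply: divr_gt0.
  set N := maxn N1 N2.
  have h1 := hN1 N (leq_maxl _ _).
  have h2 := hN2 N (leq_maxr _ _).
  set delta := ip (v N) s - ip p s in h2.
  have hcN : ip (x - v N) s = c - delta by rewrite /c /delta !(ipBl hip); ring.
  have hSv : S ((r%:C * c) *: s + v N) by apply: Scomb => //; case: (hvP N).
  have := dle _ hSv.
  have -> : x - ((r%:C * c) *: s + v N) = (x - v N) + (- (r%:C * c)) *: s.
    by rewrite scaleNr opprD [RHS]addrAC addrA.
  rewrite nnD // (nnZ hip) (ipZr hip) hcN.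
  have := hvP N; case=> _ hN.
  have hnsq : nsq (- (r%:C * c)) = r ^+ 2 * K.
    by rewrite nsqN /K /nsq cReM cImM /=; ring.
  rewrite hnsq.
  have hre : complex.Re ((- (r%:C * c))^* * (c - delta)) =
     - r * K + r * (complex.Re c * complex.Re delta + complex.Im c * complex.Im delta).
    by rewrite cReM cReJ cImJ cReN cImN cReM cImM /= cReD cImD cReN cImN /K /nsq; ring.
  rewrite hre.
  set y := complex.Re c * complex.Re delta + complex.Im c * complex.Im delta.
  have hy : y ^+ 2 <= K * nsq delta.
    rewrite /y /K /nsq.
    have := sqr_ge0 (complex.Re c * complex.Im delta - complex.Im c * complex.Re delta).
    move=> hh; nra.
  have hy2 : y ^+ 2 < K ^+ 2 / 16.
    apply: (le_lt_trans hy).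
    have -> : K ^+ 2 / 16 = K * (K / 16) by rewrite expr2 mulrA.
    by rewrite ltr_pM2l.
  have hK4 : 0 < K / 4 by apply: divr_gt0.
  have hy2' : y ^+ 2 < (K / 4) ^+ 2 by rewrite expr_div_n; move: hy2; have -> : (4 : R) ^+ 2 = 16 by rewrite expr2; ring.
  have hy3 : y < K / 4.
    rewrite ltNge; apply/negP => hh.
    have : (K / 4) ^+ 2 <= y ^+ 2 by rewrite ler_pXn2r // ?nnegrE ?(ltW hK4) //; apply: le_trans hh; apply: ltW.
    by rewrite leNgt hy2'.
  have hy4 : - y < K / 4.
    rewrite ltNge; apply/negP => hh.
    have : (K / 4) ^+ 2 <= (- y) ^+ 2 by rewrite ler_pXn2r // ?nnegrE ?(ltW hK4) //; apply: le_trans hh; apply: ltW.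
    by rewrite sqrrN leNgt hy2'.
  have hrK : r ^+ 2 * K * nn s <= r * K.
    have -> : r ^+ 2 * K * nn s = (r * K) * (r * nn s) by rewrite expr2; ring.
    rewrite -[X in _ <= X]mulr1 ler_pM2l; [lra | exact: mulr_gt0].
  move=> hd.
  have hry : r * y < r * (K / 4) by rewrite ltr_pM2l.
  lra.
have xp : x = p.
  apply/eqP; rewrite -subr_eq0; apply/eqP; exact: Stot.
have [N hN] := hp e he.
exists (v N); split; first by case: (hvP N).
by rewrite xp nnB_sym //; apply: hN.
Qed.

End Dens.


End P4.
Import P4.

Module P5.

Local Open Scope complex_scope.
Local Open Scope ring_scope.
Set Implicit Arguments.
Unset Strict Implicit.
Unset Printing Implicit Defensive.

Lemma nsqJ (R : realType) (c : R[i]) : nsq (c^*) = nsq c.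
Proof. by rewrite /nsq cReJ cImJ sqrrN. Qed.

Lemma conv_ipr (R : realType) (H : lmodType R[i]) (ip : H -> H -> R[i]) (hip : is_inner_product ip)
  u x b : conv ip u x -> forall e : R, 0 < e -> exists N, forall m, (N <= m)%N ->
  nsq (ip b (u m) - ip b x) < e.
Proof.
move=> h e he; have [N hN] := conv_ipl hip b h he; exists N => m hm.
by rewrite (ipC hip (u m) b) (ipC hip x b) -rmorphB nsqJ; apply: hN.
Qed.

Section Ext.
Variable R : realType.
Local Notation C := R[i].
Variables (H H' : lmodType C) (ip : H -> H -> C) (ip' : H' -> H' -> C).
Hypothesis hip : is_inner_product ip.
Hypothesis hip' : is_inner_product ip'.
Hypothesis hcomp : forall u, cauchy ip u -> exists x, conv ip u x.
Hypothesis hcomp' : forall u, cauchy ip' u -> exists x, conv ip' u x.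
Variable T : Type.
Variables (s : T -> H) (s' : T -> H').
Hypothesis gram : forall t u, ip (s t) (s u) = ip' (s' t) (s' u).
Hypothesis tot : forall y, (forall t, ip y (s t) = 0) -> y = 0.
Hypothesis tot' : forall y, (forall t, ip' y (s' t) = 0) -> y = 0.

Inductive SP : H -> H' -> Prop :=
| SP0 : SP 0 0
| SPs t : SP (s t) (s' t)
| SPc a x x' y y' : SP x x' -> SP y y' -> SP (a *: x + y) (a *: x' + y').

Lemma SP_ip_s t y y' : SP y y' -> ip (s t) y = ip' (s' t) y'.
Proof.
elim=> [|u|a x x' y0 y0' _ h1 _ h2]; first by rewrite (ip0r hip) (ip0r hip').
  exact: gram.
by rewrite (ipDr hip) (ipDr hip') (ipZr hip) (ipZr hip') h1 h2.
Qed.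

Lemma SP_ip x x' y y' : SP x x' -> SP y y' -> ip x y = ip' x' y'.
Proof.
move=> hx hy; elim: hx => [|t|a x0 x0' z z' _ h1 _ h2].
- by rewrite (ip0l hip) (ip0l hip').
- exact: SP_ip_s.
- by rewrite (ipDl hip) (ipDl hip') (ipZl hip) (ipZl hip') h1 h2.
Qed.

Lemma SP_sub x x' y y' : SP x x' -> SP y y' -> SP (x - y) (x' - y').
Proof.
move=> hx hy; have := SPc (-1) hy hx.
by rewrite !scaleN1r addrC [X in SP _ X]addrC.
Qed.

Lemma SP_nn x x' y y' : SP x x' -> SP y y' -> nn ip (x - y) = nn ip' (x' - y').
Proof. by move=> hx hy; rewrite /nn (SP_ip (SP_sub hx hy) (SP_sub hx hy)). Qed.

Lemma dens x e : 0 < e -> exists v v', SP v v' /\ nn ip (x - v) < e.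
Proof.
move=> he.
have := @density R H ip hip hcomp (fun v => exists v', SP v v') _ _ _ x e he.
case.
- by exists 0; apply: SP0.
- by move=> a y z [y' hy] [z' hz]; exists (a *: y' + z'); apply: SPc.
- move=> y hy; apply: tot => t; apply: hy; exists (s' t); apply: SPs.
- by move=> v [[v' hv] hn]; exists v, v'.
Qed.

Lemma lim_SP (w : nat -> H) (w' : nat -> H') x :
  (forall m, SP (w m) (w' m)) -> conv ip w x ->
  exists y', conv ip' w' y' /\ forall t, ip' y' (s' t) = ip x (s t).
Proof.
move=> hw hc.
have hc' : cauchy ip' w'.
  move=> e he; have [N hN] := conv_cauchy hip hc he; exists N => m k hm hk.
  by rewrite -(SP_nn (hw m) (hw k)); apply: hN.
have [y' hy'] := hcomp' hc'.
exists y'; split => // t.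
apply/eqP; rewrite -subr_eq0; apply/eqP; apply: nsq_small => e he.
have [|N1 h1] := conv_ipl hip' (s' t) hy' (e := e / 4); first lra.
have [|N2 h2] := conv_ipl hip (s t) hc (e := e / 4); first lra.
set N := maxn N1 N2.
have := h1 N (leq_maxl _ _); have := h2 N (leq_maxr _ _).
have -> : ip' y' (s' t) - ip x (s t) =
   - (ip' (w' N) (s' t) - ip' y' (s' t)) + (ip (w N) (s t) - ip x (s t)).
  by rewrite -(SP_ip (hw N) (SPs t)); ring.
move=> ha hb; apply: (le_lt_trans (nsqD_le _ _)); rewrite nsqN; lra.
Qed.

Lemma ext x : exists y', forall t, ip' y' (s' t) = ip x (s t).
Proof.
have hv : forall N : nat, exists p : H * H', SP p.1 p.2 /\ nn ip (x - p.1) < epsn R N.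
  by move=> N; have [v [v' [h1 h2]]] := dens x (epsn_gt0 R N); exists (v, v').
have [f hf] := choice hv.
have hc : conv ip (fun m => (f m).1) x.
  move=> e he; have [N hN] := small_inv he; exists N => m hm.
  rewrite nnB_sym //; case: (hf m) => _ h; apply: lt_trans h _; exact: hN.
have [|y' [_ hy']] := @lim_SP (fun m => (f m).1) (fun m => (f m).2) x _ hc.
  by move=> m; case: (hf m).
by exists y'.
Qed.

Definition U x : H' := projT1 (cid (ext x)).

Lemma U_char x t : ip' (U x) (s' t) = ip x (s t).
Proof. by rewrite /U; case: (cid (ext x)). Qed.

Lemma U_uniq x y' : (forall t, ip' y' (s' t) = ip x (s t)) -> y' = U x.
Proof.
move=> h; apply/eqP; rewrite -subr_eq0; apply/eqP; apply: tot' => t.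
by rewrite (ipBl hip') h U_char subrr.
Qed.

Lemma U_lin a x y : U (a *: x + y) = a *: U x + U y.
Proof.
symmetry; apply: U_uniq => t.
by rewrite (ipDl hip) (ipDl hip') (ipZl hip) (ipZl hip') !U_char.
Qed.

Lemma U_s t : U (s t) = s' t.
Proof. by symmetry; apply: U_uniq => u; rewrite gram. Qed.

Lemma U_ip_SP x v v' : SP v v' -> ip' (U x) v' = ip x v.
Proof.
elim=> [|t|a y y' z z' _ h1 _ h2].
- by rewrite (ip0r hip) (ip0r hip').
- exact: U_char.
- by rewrite (ipDr hip) (ipDr hip') (ipZr hip) (ipZr hip') h1 h2.
Qed.

Lemma U_iso x y : ip' (U x) (U y) = ip x y.
Proof.
have hv : forall N : nat, exists p : H * H', SP p.1 p.2 /\ nn ip (y - p.1) < epsn R N.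
  by move=> N; have [v [v' [h1 h2]]] := dens y (epsn_gt0 R N); exists (v, v').
have [f hf] := choice hv.
have hc : conv ip (fun m => (f m).1) y.
  move=> e he; have [N hN] := small_inv he; exists N => m hm.
  rewrite nnB_sym //; case: (hf m) => _ h; apply: lt_trans h _; exact: hN.
have [|y' [hy'c hy']] := @lim_SP (fun m => (f m).1) (fun m => (f m).2) y _ hc.
  by move=> m; case: (hf m).
have Uy : y' = U y by apply: U_uniq.
rewrite -Uy.
apply/eqP; rewrite -subr_eq0; apply/eqP; apply: nsq_small => e he.
have [|N1 h1] := conv_ipr hip' (U x) hy'c (e := e / 4); first lra.
have [|N2 h2] := conv_ipr hip x hc (e := e / 4); first lra.
set N := maxn N1 N2.
have := h1 N (leq_maxl _ _); have := h2 N (leq_maxr _ _).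
have -> : ip' (U x) y' - ip x y =
   - (ip' (U x) (f N).2 - ip' (U x) y') + (ip x (f N).1 - ip x y).
  have := U_ip_SP x (proj1 (hf N)) => ->; ring.
move=> ha hb; apply: (le_lt_trans (nsqD_le _ _)); rewrite nsqN; lra.
Qed.

Lemma U_intertwine (F Fs : H -> H) (F' Fs' : H' -> H') (f : T -> T) :
  (forall x y, ip (F x) y = ip x (Fs y)) ->
  (forall x y, ip' (F' x) y = ip' x (Fs' y)) ->
  (forall t, Fs (s t) = s (f t)) -> (forall t, Fs' (s' t) = s' (f t)) ->
  forall x, U (F x) = F' (U x).
Proof.
move=> hF hF' hs hs' x; symmetry; apply: U_uniq => t.
by rewrite hF' hs' U_char hF hs.
Qed.

End Ext.


End P5.
Import P5.

Module P6.

Local Open Scope complex_scope.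
Local Open Scope ring_scope.
Set Implicit Arguments.
Unset Strict Implicit.
Unset Printing Implicit Defensive.

Section Ops.
Variable R : realType.
Local Notation C := R[i].
Variable H : lmodType C.
Variable ip : H -> H -> C.
Hypothesis hip : is_inner_product ip.
Variable n : nat.
Variable z : 'I_n -> 'I_n -> C.
Hypothesis hz : structure_constants z.
Variables V Vs : 'I_n -> H -> H.
Hypothesis hV : doubly_noncommuting ip z V Vs.

Lemma lin0 (F : H -> H) : (forall a x y, F (a *: x + y) = a *: F x + F y) -> F 0 = 0.
Proof.
move=> hF; have h := hF 1 0 0.
rewrite !scale1r addr0 in h.
have h2 : F 0 + 0 = F 0 + F 0 by rewrite addr0.
by move/addrI: h2.
Qed.

Lemma zz i j : i != j -> z i j * (z i j)^* = 1.
Proof. by move=> ij; rewrite -normCK; case: (hz ij) => -> _; rewrite expr1n. Qed.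

Lemma zzc i j : i != j -> (z i j)^* * z i j = 1.
Proof. by move=> ij; rewrite mulrC zz. Qed.

Lemma zsym i j : i != j -> z j i = (z i j)^*.
Proof. by move=> ij; case: (hz ij). Qed.

Lemma Vlin i a x y : V i (a *: x + y) = a *: V i x + V i y.
Proof. by case: hV => h _; case: (h i) => [[hl _] _]; apply: hl. Qed.

Lemma Viso i x y : ip (V i x) (V i y) = ip x y.
Proof. by case: hV => h _; case: (h i) => [[_ hi] _]; apply: hi. Qed.

Lemma Vadj i x y : ip (V i x) y = ip x (Vs i y).
Proof. by case: hV => h _; case: (h i) => _; apply. Qed.

Lemma Vsadj i x y : ip (Vs i x) y = ip x (V i y).
Proof. by rewrite (ipC hip) -Vadj -(ipC hip). Qed.

Lemma Vrel i j x : i != j -> Vs i (V j x) = (z i j)^* *: V j (Vs i x).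
Proof. by case: hV => _ h ij; apply: h. Qed.

Lemma Vslin i a x y : Vs i (a *: x + y) = a *: Vs i x + Vs i y.
Proof.
apply: (ip_ext hip) => w.
by rewrite -Vadj (ipDr hip) (ipZr hip) (ipDr hip) (ipZr hip) -!Vadj.
Qed.

Lemma VsV i x : Vs i (V i x) = x.
Proof. by apply: (ip_ext hip) => w; rewrite -Vadj Viso. Qed.

Lemma V0 i : V i 0 = 0.
Proof. exact: lin0 (Vlin i). Qed.

Lemma Vs0 i : Vs i 0 = 0.
Proof. exact: lin0 (Vslin i). Qed.

Lemma VD i x y : V i (x + y) = V i x + V i y.
Proof. by rewrite -[x]scale1r Vlin !scale1r. Qed.
Lemma VZ i a x : V i (a *: x) = a *: V i x.
Proof. by rewrite -[a *: x]addr0 Vlin V0 addr0. Qed.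
Lemma VN i x : V i (- x) = - V i x.
Proof. by rewrite -scaleN1r VZ scaleN1r. Qed.
Lemma VB i x y : V i (x - y) = V i x - V i y.
Proof. by rewrite VD VN. Qed.
Lemma VsD i x y : Vs i (x + y) = Vs i x + Vs i y.
Proof. by rewrite -[x]scale1r Vslin !scale1r. Qed.
Lemma VsZ i a x : Vs i (a *: x) = a *: Vs i x.
Proof. by rewrite -[a *: x]addr0 Vslin Vs0 addr0. Qed.
Lemma VsN i x : Vs i (- x) = - Vs i x.
Proof. by rewrite -scaleN1r VsZ scaleN1r. Qed.
Lemma VsB i x y : Vs i (x - y) = Vs i x - Vs i y.
Proof. by rewrite VsD VsN. Qed.

Lemma VVc i j x : i != j -> V i (V j x) = z i j *: V j (V i x).
Proof.
move=> ij; set a := V i (V j x); set b := V j (V i x).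
have hab : ip a b = z i j * ip x x.
  by rewrite /a Vadj /b Vrel // (ipZr hip) VsV Viso conjCK.
have hba : ip b a = (z i j)^* * ip x x.
  rewrite (ipC hip a b) hab rmorphM; congr (_ * _).
  by rewrite {2}(ipC hip x x).
have haa : ip a a = ip x x by rewrite /a !Viso.
have hbb : ip b b = ip x x by rewrite /b !Viso.
apply/eqP; rewrite -subr_eq0; apply/eqP/(ip_eq0 hip).
rewrite !(ipBl hip) !(ipBr hip) !(ipZl hip) !(ipZr hip) hab hba haa hbb.
have := zz ij; set c := z i j; set d := (z i j)^* => hcd.
have -> : c * (d * ip x x) = (c * d) * ip x x by ring.
rewrite hcd mulrA (mulrC d c) hcd !mul1r !subrr ?subr0 //.
Qed.

Lemma VsVs i j y : i != j -> Vs j (Vs i y) = (z i j)^* *: Vs i (Vs j y).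
Proof.
move=> ij; apply: (ip_ext hip) => x.
by rewrite (ipZr hip) conjCK -!Vadj -(ipZl hip) -VVc.
Qed.

Lemma VVs j l x : j != l -> V j (Vs l x) = z l j *: Vs l (V j x).
Proof.
move=> jl; rewrite Vrel 1?eq_sym // scalerA zz ?scale1r // eq_sym //.
Qed.

Definition G (l : 'I_n) (k : nat) (x : H) := iter k (V l) (iter k (Vs l) x).

Lemma iterV_lin l k a x y : iter k (V l) (a *: x + y) = a *: iter k (V l) x + iter k (V l) y.
Proof. by elim: k => //= k ->; rewrite Vlin. Qed.
Lemma iterVs_lin l k a x y : iter k (Vs l) (a *: x + y) = a *: iter k (Vs l) x + iter k (Vs l) y.
Proof. by elim: k => //= k ->; rewrite Vslin. Qed.

Lemma iter_lin_Z (F : H -> H) (hF : forall a x y, F (a *: x + y) = a *: F x + F y) k a x :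
  iter k F (a *: x) = a *: iter k F x.
Proof.
have F0 := lin0 hF.
elim: k => //= k ->; by rewrite -[a *: _]addr0 hF F0 addr0.
Qed.

Lemma iter_lin_B (F : H -> H) (hF : forall a x y, F (a *: x + y) = a *: F x + F y) k x y :
  iter k F (x - y) = iter k F x - iter k F y.
Proof.
have linB : forall x y, F (x - y) = F x - F y.
  by move=> x0 y0; rewrite -scaleN1r addrC hF scaleN1r addrC.
by elim: k => //= k ->; rewrite linB.
Qed.

Lemma iter_comm (F P : H -> H) (c : C) :
  (forall y, F (P y) = c *: P (F y)) ->
  (forall a x y, F (a *: x + y) = a *: F x + F y) ->
  (forall a y, P (a *: y) = a *: P y) ->
  forall k y, iter k F (P y) = c ^+ k *: P (iter k F y).
Proof.
move=> hFP hF hP; elim=> [|k IH] y /=; first by rewrite scale1r.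
rewrite IH -[c ^+ k *: _]addr0 hF.
have F0 := lin0 hF.
by rewrite F0 addr0 hFP scalerA exprSr.
Qed.


Lemma iterVZ l k a x : iter k (V l) (a *: x) = a *: iter k (V l) x.
Proof. exact: (iter_lin_Z (Vlin l) k a x). Qed.
Lemma iterVsZ l k a x : iter k (Vs l) (a *: x) = a *: iter k (Vs l) x.
Proof. exact: (iter_lin_Z (Vslin l) k a x). Qed.

Lemma G_lin l k a x y : G l k (a *: x + y) = a *: G l k x + G l k y.
Proof. by rewrite /G iterVs_lin iterV_lin. Qed.

Lemma G_B l k x y : G l k (x - y) = G l k x - G l k y.
Proof. exact: iter_lin_B (@G_lin l k) 1 x y. Qed.

Lemma G_Vs_comm l j k x : l != j -> G l k (Vs j x) = Vs j (G l k x).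
Proof.
move=> lj; rewrite /G.
rewrite (@iter_comm (Vs l) (Vs j) ((z j l)^*)); first last.
- exact: VsZ.
- exact: Vslin.
- by move=> y; rewrite VsVs // eq_sym.
rewrite iterVZ (@iter_comm (V l) (Vs j) (z j l)); first last.
- exact: VsZ.
- exact: Vlin.
- by move=> y; rewrite VVs.
by rewrite scalerA -exprMn zzc 1?eq_sym // expr1n scale1r.
Qed.

Lemma G_V_comm l j k x : l != j -> G l k (V j x) = V j (G l k x).
Proof.
move=> lj; rewrite /G.
rewrite (@iter_comm (Vs l) (V j) ((z l j)^*)); first last.
- exact: VZ.
- exact: Vslin.
- by move=> y; rewrite Vrel.
rewrite iterVZ (@iter_comm (V l) (V j) (z l j)); first last.
- exact: VZ.
- exact: Vlin.
- by move=> y; rewrite VVc.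
by rewrite scalerA -exprMn zzc // expr1n scale1r.
Qed.

Lemma iterVsV l k y : iter k (Vs l) (iter k (V l) y) = y.
Proof.
elim: k => //= k IH.
by rewrite -iterS iterSr VsV IH.
Qed.

Definition Wc (A : {set 'I_n}) (w : H) :=
  (forall i, i \in A -> Vs i w = 0) /\ (forall j, j \notin A -> forall k, G j k w = w).

Lemma Wc_Vs (A : {set 'I_n}) j (w : H) : j \notin A -> Wc A w -> Wc A (Vs j w).
Proof.
move=> jA [h1 h2]; split.
  move=> i iA; have ij : j != i by apply: contraNneq jA => ->.
  by rewrite VsVs // h1 // Vs0 scaler0.
move=> l lA k; have [<-|lj] := eqVneq j l; last by rewrite G_Vs_comm 1?eq_sym // h2.
rewrite /G -iterSr.
by rewrite -[in RHS](h2 _ jA k.+1) /G iterS VsV.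
Qed.

Lemma Wc_V (A : {set 'I_n}) j (w : H) : j \notin A -> Wc A w -> Wc A (V j w).
Proof.
move=> jA [h1 h2]; split.
  move=> i iA; have ij : i != j by apply: contraNneq jA => <-.
  by rewrite Vrel // h1 // V0 scaler0.
move=> l lA k; have [<-|lj] := eqVneq j l; last by rewrite G_V_comm 1?eq_sym // h2.
case: k => [|k] //.
by rewrite /G [iter k.+1 (Vs j) _]iterSr VsV iterS; congr (V j _); apply: h2.
Qed.

Lemma Wc_iterVs (A : {set 'I_n}) j k (w : H) : j \notin A -> Wc A w -> Wc A (iter k (Vs j) w).
Proof. by move=> jA hw; elim: k => //= k IH; apply: Wc_Vs. Qed.

Local Notation PP m := (fun j (f : H -> H) => fun x => iter (m j) (V j) (f x)).

Lemma pp_zero (l : seq 'I_n) x : foldr (PP (fun _ => 0%N)) id l x = x.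
Proof. by elim: l => //= a l ->. Qed.

Lemma pp_single (j : 'I_n) k (l : seq 'I_n) x : uniq l ->
  foldr (PP (fun i => if i == j then k else 0%N)) id l x = if j \in l then iter k (V j) x else x.
Proof.
elim: l => //= a l IH /andP[al ul]; rewrite IH // in_cons.
have [aj|aj] := eqVneq a j; first by subst a; rewrite /= (negbTE al).
by [].
Qed.

Lemma W_Wc (A : {set 'I_n}) (w : H) : wandering V Vs A w -> Wc A w.
Proof.
move=> hw; split.
  move=> i iA; have [y [hy ->]] := hw (fun _ => 0%N).
  by rewrite /prod_pow pp_zero; apply: hy.
move=> j jA k; have [y [hy ->]] := hw (fun i => if i == j then k else 0%N).
rewrite /prod_pow pp_single; last by rewrite filter_uniq // enum_uniq.
by rewrite mem_filter jA mem_enum /G iterVsV.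
Qed.

Lemma Wc_W (A : {set 'I_n}) (w : H) : Wc A w -> wandering V Vs A w.
Proof.
move=> hw m.
pose f := fun w j => iter (m j) (Vs j) w.
have key : forall l : seq 'I_n, (forall j, j \in l -> j \notin A) -> forall w, Wc A w ->
   foldr (PP m) id l (foldl f w l) = w /\ Wc A (foldl f w l).
  elim=> [|j l IH] hl w0 hw0 //=.
  have jA : j \notin A by apply: hl; rewrite mem_head.
  have hw1 := Wc_iterVs (m j) jA hw0.
  have [e1 e2] := IH (fun i il => hl i (@mem_behead _ (j :: l) i il)) _ hw1.
  by split => //; rewrite e1; case: hw0 => _ h; apply: h.
have hl : forall j, j \in [seq j <- enum 'I_n | j \notin A] -> j \notin A.
  by move=> j; rewrite mem_filter => /andP[].
have [e1 e2] := key [seq j <- enum 'I_n | j \notin A] hl w hw.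
by exists (foldl f w [seq j <- enum 'I_n | j \notin A]); split => //; case: e2.
Qed.

Lemma W_Vs0 (A : {set 'I_n}) (w : H) i : wandering V Vs A w -> i \in A -> Vs i w = 0.
Proof. by move=> /W_Wc [h _]; apply: h. Qed.

Lemma W_VVs (A : {set 'I_n}) (w : H) j : wandering V Vs A w -> j \notin A -> V j (Vs j w) = w.
Proof. by move=> /W_Wc [_ h] jA; have := h j jA 1%N. Qed.

Lemma W_Vs (A : {set 'I_n}) (w : H) j : wandering V Vs A w -> j \notin A -> wandering V Vs A (Vs j w).
Proof. by move=> /W_Wc h jA; apply: Wc_W; apply: Wc_Vs. Qed.

Lemma W_V (A : {set 'I_n}) (w : H) j : wandering V Vs A w -> j \notin A -> wandering V Vs A (V j w).
Proof. by move=> /W_Wc h jA; apply: Wc_W; apply: Wc_V. Qed.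

Lemma W_ortho (A B : {set 'I_n}) (w u : H) : A != B -> wandering V Vs A w -> wandering V Vs B u -> ip w u = 0.
Proof.
move=> AB hw hu.
have [i hi] : exists i, (i \in A) != (i \in B).
  apply/existsP; apply: contraR AB => /existsPn h; apply/eqP/setP => i.
  by move: (h i); case: (i \in A); case: (i \in B).
move: hi; case iA: (i \in A); case iB: (i \in B) => // _.
  rewrite -(W_VVs hu (negbT iB)) -Vsadj (W_Vs0 hw iA) (ip0l hip) //.
rewrite (ipC hip) -(W_VVs hw (negbT iA)) -Vsadj (W_Vs0 hu iB) (ip0l hip) conjC0 //.
Qed.

Definition act (b : bool) (i : 'I_n) : H -> H := if b then V i else Vs i.
Definition evw (X : seq (bool * 'I_n)) (x : H) : H := foldr (fun l y => act l.1 l.2 y) x X.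
Definition dag (X : seq (bool * 'I_n)) := rev (map (fun l => (~~ l.1, l.2)) X).

Lemma act_lin b i a x y : act b i (a *: x + y) = a *: act b i x + act b i y.
Proof. by case: b; [apply: Vlin | apply: Vslin]. Qed.

Lemma evw_lin X a x y : evw X (a *: x + y) = a *: evw X x + evw X y.
Proof. by elim: X => //= l X ->; rewrite act_lin. Qed.

Lemma evw0 X : evw X 0 = 0.
Proof. exact: lin0 (@evw_lin X). Qed.

Lemma evwZ X a x : evw X (a *: x) = a *: evw X x.
Proof. by rewrite -[a *: x]addr0 evw_lin evw0 addr0. Qed.

Lemma act_adj b i x y : ip (act b i x) y = ip x (act (~~ b) i y).
Proof. by case: b; [apply: Vadj | apply: Vsadj]. Qed.

Lemma evw_cat X Y x : evw (X ++ Y) x = evw X (evw Y x).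
Proof. by rewrite /evw foldr_cat. Qed.

Lemma evw_adj X x y : ip (evw X x) y = ip x (evw (dag X) y).
Proof.
elim: X x y => //= l X IH x y.
by rewrite act_adj IH /dag map_cons rev_cons -cats1 evw_cat.
Qed.

Definition Perp (y : H) := forall (A : {set 'I_n}) X w, wandering V Vs A w -> ip y (evw X w) = 0.

Lemma Perp_act b i y : Perp y -> Perp (act b i y).
Proof.
move=> hy A X w hw; rewrite act_adj.
by have := hy A ((~~ b, i) :: X) w hw.
Qed.

Lemma Perp_V i y : Perp y -> Perp (V i y). Proof. exact: (@Perp_act true i). Qed.
Lemma Perp_Vs i y : Perp y -> Perp (Vs i y). Proof. exact: (@Perp_act false i). Qed.
Lemma Perp_iterVs i k y : Perp y -> Perp (iter k (Vs i) y).
Proof. by move=> hy; elim: k => //= k IH; apply: Perp_Vs. Qed.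
Lemma Perp_B x y : Perp x -> Perp y -> Perp (x - y).
Proof. by move=> hx hy A X w hw; rewrite (ipBl hip) (hx A X w hw) (hy A X w hw) subrr. Qed.

Lemma ker_Vs (i j : 'I_n) (v : H) : i != j -> Vs i v = 0 -> Vs i (Vs j v) = 0.
Proof. by move=> ij h; rewrite VsVs 1?eq_sym // h Vs0 scaler0. Qed.
Lemma ker_V (i j : 'I_n) (v : H) : i != j -> Vs i v = 0 -> Vs i (V j v) = 0.
Proof. by move=> ij h; rewrite Vrel // h V0 scaler0. Qed.
Lemma ker_iterVs (i j : 'I_n) k (v : H) : i != j -> Vs i v = 0 -> Vs i (iter k (Vs j) v) = 0.
Proof. by move=> ij h; elim: k => //= k IH; apply: ker_Vs. Qed.

Lemma fix_iterVs (l j : 'I_n) k (v : H) : l != j -> (forall k', G l k' v = v) -> forall k', G l k' (iter k (Vs j) v) = iter k (Vs j) v.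
Proof. by move=> lj h; elim: k => //= k IH k'; rewrite G_Vs_comm // IH. Qed.

Lemma tot_gen y : Perp y -> y = 0.
Proof.
move=> hy; apply/eqP/negPn/negP => yn0.
pose D (j : 'I_n) k (v : H) := iter k (Vs j) v - V j (Vs j (iter k (Vs j) v)).
have claim : forall l : seq 'I_n, uniq l -> exists y' (A : {set 'I_n}),
   [/\ y' != 0, Perp y', (forall i, i \in A -> i \in l),
       (forall i, i \in l -> i \in A -> Vs i y' = 0) &
       (forall j, j \in l -> j \notin A -> forall k, G j k y' = y')].
  elim=> [|j l IH] /=.
    by move=> _; exists y, set0; split => // i; rewrite in_set0.
  case/andP=> jl ul; have [y1 [A1 [y1n0 p1 sA1 k1 f1]]] := IH ul.
  have jA1 : j \notin A1 by apply: contra jl; apply: sA1.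
  have [[k hk]|hno] := boolp.pselect (exists k, D j k y1 != 0).
    exists (D j k y1), (j |: A1); split => //.
    - by apply: Perp_B; [apply: Perp_iterVs | apply: Perp_V; apply: Perp_Vs; apply: Perp_iterVs].
    - move=> i; rewrite in_setU1 in_cons => /orP[->//|/sA1 ->]; by rewrite orbT.
    - move=> i; rewrite in_cons in_setU1 => /orP[/eqP ->|il] /orP[/eqP ji|iA].
      + by rewrite /D VsB VsV subrr.
      + by rewrite /D VsB VsV subrr.
      + by move: jl; rewrite -ji il.
      + have ij : i != j by apply: contraNneq jl => <-.
        have h0 : Vs i y1 = 0 by apply: k1.
        have h1 := ker_iterVs k ij h0.
        by rewrite /D VsB h1 (ker_V ij (ker_Vs ij h1)) subrr.
    - move=> i; rewrite in_cons in_setU1 => /orP[/eqP ->|il]; first by rewrite eqxx.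
      rewrite negb_or => /andP[ij iA] k'.
      have hf := fix_iterVs k ij (f1 i il iA).
      by rewrite /D G_B G_V_comm // G_Vs_comm // !hf.
  have hD : forall k, D j k y1 = 0.
    by move=> k; apply/eqP/negPn/negP => h; apply: hno; exists k.
  exists y1, A1; split => //.
  - by move=> i /sA1 il; rewrite in_cons il orbT.
  - move=> i; rewrite in_cons => /orP[/eqP ->|il]; first by rewrite (negbTE jA1).
    by apply: k1.
  - move=> i; rewrite in_cons => /orP[/eqP -> _|il iA]; last by apply: f1.
    elim=> [|k IH2] //.
    rewrite /G iterSr iterS -[X in _ = X]IH2 /G.
    have := hD k; rewrite /D => /eqP; rewrite subr_eq0 => /eqP <-.
    by [].
have [y' [A [y'n0 py' _ k1 f1]]] := claim _ (enum_uniq 'I_n).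
have hw : wandering V Vs A y'.
  apply: Wc_W; split.
    by move=> i iA; apply: k1 => //; rewrite mem_enum.
  by move=> j jA; apply: f1 => //; rewrite mem_enum.
have := py' A [::] y' hw; rewrite /= => /(ip_eq0 hip) h.
by rewrite h eqxx in y'n0.
Qed.

End Ops.


End P6.
Import P6.

Module P7.

Local Open Scope complex_scope.
Local Open Scope ring_scope.
Set Implicit Arguments.
Unset Strict Implicit.
Unset Printing Implicit Defensive.

Section Words.
Variable n : nat.
Local Notation L := (bool * 'I_n)%type.

Fixpoint inv (Z : seq L) : nat :=
  if Z is l :: Z' then ((if l.1 then 0 else count (fun l : L => l.1) Z') + inv Z')%N else 0%N.

Definition cntF (Z : seq L) := count (fun l : L => ~~ l.1) Z.
Definition cntT (Z : seq L) := count (fun l : L => l.1) Z.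

Lemma inv_cat X Y : inv (X ++ Y) = (inv X + inv Y + cntF X * cntT Y)%N.
Proof.
elim: X => [|l X IH] /=; first by rewrite /cntF /= mul0n addn0.
rewrite IH /cntF /cntT /= count_cat; case: l.1 => /=; rewrite /cntT; lia.
Qed.

Definition msr (Z : seq L) := (inv Z * (size Z).+1 + size Z)%N.

Lemma msr_cons_true j Z : (msr Z < msr ((true, j) :: Z))%N.
Proof. rewrite /msr /=; nia. Qed.

Lemma msr_rcons_false i Z : (msr Z < msr (rcons Z (false, i)))%N.
Proof. rewrite /msr -cats1 inv_cat size_cat /= /cntT /= muln0 !addn0 addn1; nia. Qed.

Lemma msr_del L1 k l R1 : (msr (L1 ++ R1) < msr (L1 ++ (false, k) :: (true, l) :: R1))%N.
Proof.
rewrite /msr !inv_cat !size_cat /= /cntT /=.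
set a := count _ R1; set b := cntF L1; nia.
Qed.

Lemma msr_swap L1 k l R1 : (msr (L1 ++ (true, l) :: (false, k) :: R1) < msr (L1 ++ (false, k) :: (true, l) :: R1))%N.
Proof.
rewrite /msr !inv_cat !size_cat /= /cntT /=.
set a := count _ R1; set b := cntF L1; nia.
Qed.

Lemma adj (Z : seq L) k : (exists Y l, Z = rcons Y (true, l)) ->
  exists L1 k' l R1, (false, k) :: Z = L1 ++ (false, k') :: (true, l) :: R1.
Proof.
elim: Z k => [|[b l] Z IH] k [Y [l' hY]].
  by case: Y hY.
case: b hY => hY; first by exists [::], k, l, Z.
case: Y hY => [|y Y] /= hY; first by case: hY.
case: hY => _ hZ.
have [L1 [k' [l1 [R1 e]]]] := IH l (ex_intro _ Y (ex_intro _ l' hZ)).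
by exists ((false, k) :: L1), k', l1, R1; rewrite e.
Qed.

Lemma word_cases (Z : seq L) :
  [\/ Z = [::], exists j Z', Z = (true, j) :: Z',
      exists i Z', Z = rcons Z' (false, i) |
      exists L1 k l R1, Z = L1 ++ (false, k) :: (true, l) :: R1].
Proof.
case: Z => [|[b k] Z]; first by constructor 1.
case: b; first by constructor 2; exists k, Z.
case/lastP: Z => [|Y [b l]]; first by constructor 3; exists k, [::].
case: b.
  by constructor 4; apply: adj; exists Y, l.
by constructor 3; exists l, ((false, k) :: Y).
Qed.

End Words.

Section Gram.
Variable R : realType.
Local Notation C := R[i].
Variables (H H' : lmodType C) (ip : H -> H -> C) (ip' : H' -> H' -> C).
Hypothesis hip : is_inner_product ip.
Hypothesis hip' : is_inner_product ip'.
Variable n : nat.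
Variable z : 'I_n -> 'I_n -> C.
Hypothesis hz : structure_constants z.
Variables (V Vs : 'I_n -> H -> H) (V' Vs' : 'I_n -> H' -> H').
Hypothesis hV : doubly_noncommuting ip z V Vs.
Hypothesis hV' : doubly_noncommuting ip' z V' Vs'.
Variable phi : {set 'I_n} -> H -> H'.
Hypothesis hphi : forall A, unitary_between ip ip' (wandering V Vs A) (wandering V' Vs' A) (phi A) /\
  forall j, j \notin A -> forall x, wandering V Vs A x -> phi A (V j x) = V' j (phi A x).

Lemma phiW (A : {set 'I_n}) (w : H) : wandering V Vs A w -> wandering V' Vs' A (phi A w).
Proof. by case: (hphi A) => [[h _ _ _] _]; apply: h. Qed.

Lemma phi_iso (A : {set 'I_n}) (w u : H) : wandering V Vs A w -> wandering V Vs A u -> ip' (phi A w) (phi A u) = ip w u.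
Proof. by case: (hphi A) => [[_ _ _ h] _]; apply: h. Qed.

Lemma phi_V (A : {set 'I_n}) (j : 'I_n) (w : H) : j \notin A -> wandering V Vs A w -> phi A (V j w) = V' j (phi A w).
Proof. by move=> jA hw; case: (hphi A) => _ h; apply: h. Qed.

Lemma phi_Vs (A : {set 'I_n}) (j : 'I_n) (w : H) : j \notin A -> wandering V Vs A w -> phi A (Vs j w) = Vs' j (phi A w).
Proof.
move=> jA hw.
have hw1 := W_Vs hip hz hV hw jA.
by rewrite -{2}(W_VVs hip hV hw jA) (phi_V jA hw1) (VsV hip' hV').
Qed.

Local Notation ev := (P6.evw V Vs).
Local Notation ev' := (P6.evw V' Vs').

Lemma gram_word Z (A B : {set 'I_n}) (w u : H) : wandering V Vs A w -> wandering V Vs B u ->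
  ip w (ev Z u) = ip' (phi A w) (ev' Z (phi B u)).
Proof.
move: {2}(msr Z).+1 (ltnSn (msr Z)) => N.
elim: N Z A B w u => [|N IH] Z A B w u //.
move=> hN hw hu.
case: (word_cases Z) hN => [->|[j [Z' ->]]|[i [Z' ->]]|[L1 [k [l [R1 ->]]]]] hN.
- rewrite /=; case: (eqVneq A B) => [AB|AB]; first by subst B; rewrite phi_iso.
  rewrite (W_ortho hip hV AB hw hu) (W_ortho hip' hV' AB (phiW hw) (phiW hu)) //.
- have hN' : (msr Z' < N)%N by apply: (leq_trans (msr_cons_true j Z')); rewrite -ltnS.
  rewrite /= -(Vsadj hip hV) -(Vsadj hip' hV').
  have [jA|jA] := boolP (j \in A).
    by rewrite (W_Vs0 hip hV hw jA) (W_Vs0 hip' hV' (phiW hw) jA) (ip0l hip) (ip0l hip').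
  rewrite -(phi_Vs jA hw); apply: IH => //; exact: (@W_Vs _ _ _ hip _ _ hz _ _ hV A w j hw jA).
- have hN' : (msr Z' < N)%N by apply: (leq_trans (msr_rcons_false i Z')); rewrite -ltnS.
  rewrite -!cats1 !evw_cat /=.
  have [iB|iB] := boolP (i \in B).
    by rewrite (W_Vs0 hip hV hu iB) (W_Vs0 hip' hV' (phiW hu) iB) (evw0 hip hV) (evw0 hip' hV') (ip0r hip) (ip0r hip').
  rewrite -(phi_Vs iB hu); apply: IH => //; exact: (@W_Vs _ _ _ hip _ _ hz _ _ hV B u i hu iB).
- rewrite !evw_cat /=.
  case: (eqVneq k l) => [kl|kl].
    subst l; rewrite (VsV hip hV) (VsV hip' hV') -!evw_cat; apply: IH => //.
    by apply: (leq_trans (msr_del L1 k k R1)); rewrite -ltnS.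
  rewrite (Vrel hV _ kl) (Vrel hV' _ kl) (evwZ hip hV) (evwZ hip' hV') (ipZr hip) (ipZr hip').
  congr (_ * _).
  have -> : V l (Vs k (ev R1 u)) = ev ((true, l) :: (false, k) :: R1) u by [].
  have -> : V' l (Vs' k (ev' R1 (phi B u))) = ev' ((true, l) :: (false, k) :: R1) (phi B u) by [].
  rewrite -!evw_cat; apply: IH => //.
  by apply: (leq_trans (msr_swap L1 k l R1)); rewrite -ltnS.
Qed.

End Gram.


End P7.
Import P7.

Module P8.

Local Open Scope complex_scope.
Local Open Scope ring_scope.
Set Implicit Arguments.
Unset Strict Implicit.
Unset Printing Implicit Defensive.

Lemma hilbert_comp (R : realType) (H : lmodType R[i]) (ip : H -> H -> R[i]) :
  is_hilbert_space ip -> forall u, cauchy ip u -> exists x, conv ip u x.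
Proof.
case=> hip hc u hu; have [x hx] := hc u (cauchy_ip hip hu).
by exists x; exact: (ip_conv hip hx).
Qed.

Section Forward.
Variable R : realType.
Local Notation C := R[i].
Variables (H H' : lmodType C) (ip : H -> H -> C) (ip' : H' -> H' -> C).
Hypothesis hip : is_inner_product ip.
Hypothesis hip' : is_inner_product ip'.
Variable n : nat.
Variable z : 'I_n -> 'I_n -> C.
Variables (V Vs : 'I_n -> H -> H) (V' Vs' : 'I_n -> H' -> H').
Hypothesis hV : doubly_noncommuting ip z V Vs.
Hypothesis hV' : doubly_noncommuting ip' z V' Vs'.
Variable phi : H -> H'.
Hypothesis hphi : unitary_between ip ip' (fun _ => True) (fun _ => True) phi.
Hypothesis hint : forall i x, phi (V i x) = V' i (phi x).

Lemma f_lin a x y : phi (a *: x + y) = a *: phi x + phi y.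
Proof. by case: hphi => _ _ h _; apply: h. Qed.
Lemma f_iso x y : ip' (phi x) (phi y) = ip x y.
Proof. by case: hphi => _ _ _ h; apply: h. Qed.
Lemma f_surj y : exists x, phi x = y.
Proof. by case: hphi => _ h _ _; have [x [_ hx]] := h y I; exists x. Qed.
Lemma f0 : phi 0 = 0.
Proof.
have h := f_lin 1 0 0; rewrite !scale1r addr0 in h.
have h2 : phi 0 + 0 = phi 0 + phi 0 by rewrite addr0.
by move/addrI: h2.
Qed.
Lemma fB x y : phi (x - y) = phi x - phi y.
Proof. by rewrite -scaleN1r addrC f_lin scaleN1r addrC. Qed.
Lemma f_inj x y : phi x = phi y -> x = y.
Proof.
move=> h; apply/eqP; rewrite -subr_eq0; apply/eqP/(ip_eq0 hip).
by rewrite -f_iso fB h subrr (ip0l hip').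
Qed.
Lemma f_Vs i x : phi (Vs i x) = Vs' i (phi x).
Proof.
apply: (ip_ext hip') => y'; have [x' <-] := f_surj y'.
by rewrite f_iso -(Vadj hV) -(Vadj hV') -hint f_iso.
Qed.
Lemma f_iter i k x : phi (iter k (V i) x) = iter k (V' i) (phi x).
Proof. by elim: k => //= k IH; rewrite hint IH. Qed.
Lemma f_pp A m y : phi (prod_pow V A m y) = prod_pow V' A m (phi y).
Proof.
rewrite /prod_pow; elim: [seq _ <- _ | _] y => //= j l IH y.
by rewrite f_iter IH.
Qed.

Lemma forward A : wandering_data_equivalent ip ip' V Vs V' Vs' A.
Proof.
exists phi; split; last by move=> j _ x _; apply: hint.
split.
- move=> x hx m; have [y [hy ->]] := hx m.
  exists (phi y); split; last by rewrite f_pp.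
  by move=> i iA; rewrite -f_Vs hy // f0.
- move=> x' hx'; have [x hx] := f_surj x'; exists x; split => //.
  move=> m; have [y' [hy' e]] := hx' m; have [y hy] := f_surj y'.
  exists y; split.
    move=> i iA; apply: f_inj; rewrite f_Vs hy hy' // f0 //.
  by apply: f_inj; rewrite f_pp hy hx.
- by move=> a x y _ _; apply: f_lin.
- by move=> x y _ _; apply: f_iso.
Qed.

End Forward.

Section Backward.
Variable R : realType.
Local Notation C := R[i].
Variables (H H' : lmodType C) (ip : H -> H -> C) (ip' : H' -> H' -> C).
Hypothesis hH : is_hilbert_space ip.
Hypothesis hH' : is_hilbert_space ip'.
Variable n : nat.
Variable z : 'I_n -> 'I_n -> C.
Hypothesis hz : structure_constants z.
Variables (V Vs : 'I_n -> H -> H) (V' Vs' : 'I_n -> H' -> H').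
Hypothesis hV : doubly_noncommuting ip z V Vs.
Hypothesis hV' : doubly_noncommuting ip' z V' Vs'.
Variable phi : {set 'I_n} -> H -> H'.
Hypothesis hphi : forall A, unitary_between ip ip' (wandering V Vs A) (wandering V' Vs' A) (phi A) /\
  forall j, j \notin A -> forall x, wandering V Vs A x -> phi A (V j x) = V' j (phi A x).

Let hip : is_inner_product ip := proj1 hH.
Let hip' : is_inner_product ip' := proj1 hH'.
Let hc := hilbert_comp hH.
Let hc' := hilbert_comp hH'.

Definition TT := {t : ({set 'I_n} * seq (bool * 'I_n)) * H | wandering V Vs t.1.1 t.2}.
Definition sT (t : TT) : H := evw V Vs (sval t).1.2 (sval t).2.
Definition sT' (t : TT) : H' := evw V' Vs' (sval t).1.2 (phi (sval t).1.1 (sval t).2).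

Lemma gramT t u : ip (sT t) (sT u) = ip' (sT' t) (sT' u).
Proof.
case: t => [[[A X] w] hw]; case: u => [[[B Y] v] hv]; rewrite /sT /sT' /=.
rewrite (evw_adj hip hV) (evw_adj hip' hV') -!evw_cat.
exact: (gram_word hip hip' hz hV hV' hphi).
Qed.

Lemma gramT' t u : ip' (sT' t) (sT' u) = ip (sT t) (sT u).
Proof. by rewrite gramT. Qed.

Lemma totT y : (forall t, ip y (sT t) = 0) -> y = 0.
Proof.
move=> h; apply: (tot_gen hip hz hV) => A X w hw.
exact: (h (exist _ ((A, X), w) hw)).
Qed.

Lemma totT' y : (forall t, ip' y (sT' t) = 0) -> y = 0.
Proof.
move=> h; apply: (tot_gen hip' hz hV') => A X w' hw'.
case: (hphi A) => [[_ hs _ _] _]; have [w [hw <-]] := hs w' hw'.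
exact: (h (exist _ ((A, X), w) hw)).
Qed.

Definition UU := U hip hip' hc hc' gramT totT.
Definition UU' := U hip' hip hc' hc gramT' totT'.

Lemma backward : unitarily_equivalent ip ip' V V'.
Proof.
exists UU; split.
  split.
  - by [].
  - move=> x' _; exists (UU' x'); split => //.
    symmetry; apply: (U_uniq hip hip' hc hc' gramT totT totT') => t.
    by rewrite (U_char hip' hip hc' hc gramT' totT').
  - by move=> a x y _ _; apply: (U_lin hip hip' hc hc' gramT totT totT').
  - by move=> x y _ _; apply: (U_iso hip hip' hc hc' gramT totT totT').
move=> i x.
apply: (U_intertwine hip hip' hc hc' gramT totT totT'
  (F := V i) (Fs := Vs i) (F' := V' i) (Fs' := Vs' i)
  (f := fun t => exist _ (((sval t).1.1, (false, i) :: (sval t).1.2), (sval t).2) (svalP t))).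
- exact: (Vadj hV).
- exact: (Vadj hV').
- by case.
- by case.
Qed.

End Backward.



End P8.
Import P8.

Unset Implicit Arguments.
Set Strict Implicit.

Theorem theorem5p2 (R : realType) (n : nat) (hn : (1 <= n)%N)
  (z : 'I_n -> 'I_n -> R[i]) (hz : structure_constants z)
  (H : lmodType R[i]) (ip : H -> H -> R[i]) (hH : is_hilbert_space ip)
  (V Vs : 'I_n -> H -> H) (hV : doubly_noncommuting ip z V Vs)
  (H' : lmodType R[i]) (ip' : H' -> H' -> R[i]) (hH' : is_hilbert_space ip')
  (V' Vs' : 'I_n -> H' -> H') (hV' : doubly_noncommuting ip' z V' Vs') :
  unitarily_equivalent ip ip' V V' <->
  (forall A : {set 'I_n}, wandering_data_equivalent ip ip' V Vs V' Vs' A).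
Proof.
split.
  case=> phi [hphi hint] A.
  exact: (forward (proj1 hH) (proj1 hH') hV hV' hphi hint).
move=> h.
have [phi hphi] := choice h.
exact: (backward hH hH' hz hV hV' hphi).
Qed.
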